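(* Let $k>500$, $\ln^3k/\sqrt k<\delta<1/100$, $d=300\lceil\ln k\rceil$, $\varepsilon=50\delta/\lceil\ln k\rceil$, and let $c^1,\dots,c^k\in G$ and $X$ be as in the context, and suppose they satisfy: (1) $\|c^i-c^j\|_2\ge\sqrt d/5$ for all $i\ne j$; and (2) for every path $\pi$ of length at most $\log_2k/4$, either $|F_{u(\pi)}|\le\sqrt k$, or every threshold cut that separates at least two data points of $X\cap u(\pi)$ damages at least $\varepsilon|F_{u(\pi)}|/2$ centers of $F_{u(\pi)}$. Then every threshold tree in which each leaf contains at most one of the centers $c^1,\dots,c^k$ has at least $2\delta k$ damaged centers, where a center $c^i$ is damaged by the tree if $c^i+\varepsilon\mathbf 1$ or $c^i-\varepsilon\mathbf 1$ lies in a different leaf from $c^i$.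
   Context: $G$ is the set of points of $[0,1]^d$ all of whose coordinates are nonnegative integer multiples of $\varepsilon$; $\mathbf{1}=(1,\dots,1)\in\mathbb{R}^d$. The data set (multiset) $X$ consists, for each $i$, of $k^2\lceil\ln^3k\rceil$ copies of $c^i$ together with $c^i+\varepsilon\mathbf{1}$ and $c^i-\varepsilon\mathbf{1}$. A threshold tree is a rooted binary tree of cells of $\mathbb{R}^d$ with root $\mathbb{R}^d$, each internal node $u$ split by a cut $(i,\xi)$ into $\{y\in u:y_i\le\xi\}$ and $\{y\in u:y_i>\xi\}$. A path $\pi$ is a finite sequence of triples $(i_j,\xi_j,\lambda_j)$ with $i_j\in\{1,\dots,d\}$, $\xi_j\in\mathbb{R}$, $\lambda_j\in\{\pm1\}$; its length is the number of triples; $u(\pi)$ is the set of $y$ with $y_{i_j}\le\xi_j$ when $\lambda_j=-1$ and $y_{i_j}>\xi_j$ when $\lambda_j=+1$, for all $j$. A center $c^i\in u(\pi)$ is damaged in $u(\pi)$ if $c^i\pm\varepsilon\mathbf 1\notin u(\pi)$ for some sign; $F_{u(\pi)}$ is the set of centers in $u(\pi)$ not damaged in $u(\pi)$. A cut $(i,\xi)$ separates two points if exactly one satisfies $y_i\le\xi$, and damages a center $c$ if it separates $c$ from $c+\varepsilon\mathbf1$ or from $c-\varepsilon\mathbf1$. *)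

(* Defs.v *)
From HB Require Import structures.
From mathcomp Require Import all_boot all_order all_algebra.
From mathcomp Require Import all_classical all_reals all_analysis.
Set Implicit Arguments. Unset Strict Implicit. Unset Printing Implicit Defensive.
Import Order.TTheory GRing.Theory Num.Theory.
Local Open Scope ring_scope.

Section Defs.
Variables (R : realType) (d : nat).

Definition pt := 'I_d -> R.

Definition shift (y : pt) (s : int) (eps : R) : pt :=
  fun j => y j + s%:~R * eps.

Definition dist2 (x y : pt) : R := Num.sqrt (\sum_(j < d) (x j - y j) ^+ 2).

Definition in_grid (eps : R) (x : pt) : Prop :=
  forall j, 0 <= x j <= 1 /\ exists n : nat, x j = n%:R * eps.

(* membership in the data set X (as a set; multiplicities are irrelevant here):
   X consists of copies of c^i, together with c^i + eps 1 and c^i - eps 1 *)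
Definition inX (k : nat) (c : 'I_k -> pt) (eps : R) (p : pt) : Prop :=
  exists i : 'I_k, p = c i \/ p = shift (c i) 1 eps \/ p = shift (c i) (-1) eps.

(* a path: sequence of triples (i, xi, lambda), lambda = true encodes +1,
   lambda = false encodes -1 *)
Definition cpath := seq ('I_d * R * bool).

Definition in_cell (pi : cpath) (y : pt) : bool :=
  all (fun t => let: (i, xi, lam) := t in
                if lam then xi < y i else y i <= xi) pi.

Definition damaged_in (pi : cpath) (eps : R) (y : pt) : bool :=
  in_cell pi y &&
  (~~ in_cell pi (shift y 1 eps) || ~~ in_cell pi (shift y (-1) eps)).

Definition Fset (k : nat) (c : 'I_k -> pt) (eps : R) (pi : cpath)
  : {set 'I_k} :=
  [set i | in_cell pi (c i) && ~~ damaged_in pi eps (c i)].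

Definition separates (i : 'I_d) (xi : R) (y z : pt) : bool :=
  (y i <= xi) != (z i <= xi).

Definition cut_damages (i : 'I_d) (xi : R) (eps : R) (y : pt) : bool :=
  separates i xi y (shift y 1 eps) || separates i xi y (shift y (-1) eps).

(* threshold trees: each internal node is a cut (i, xi); the left child is
   {y_i <= xi}, the right child is {y_i > xi}; the root is R^d *)
Inductive tree :=
  | Leaf
  | Node of 'I_d & R & tree & tree.

(* the address of the leaf containing y (two points lie in the same leaf iff
   their addresses coincide) *)
Fixpoint leaf_addr (t : tree) (y : pt) : seq bool :=
  match t with
  | Leaf => [::]
  | Node i xi l r =>
      if y i <= xi then false :: leaf_addr l y else true :: leaf_addr r y
  end.

Definition tree_damages (t : tree) (eps : R) (y : pt) : bool :=
  (leaf_addr t (shift y 1 eps) != leaf_addr t y) ||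
  (leaf_addr t (shift y (-1) eps) != leaf_addr t y).

End Defs.

(* Main.v *)
Require Import Defs.
From HB Require Import structures.
From mathcomp Require Import all_boot all_order all_algebra.
From mathcomp Require Import all_classical all_reals all_analysis.
From mathcomp Require Import ring lra zify.
From Stdlib Require Import Lia.
Import Order.TTheory GRing.Theory Num.Theory.
Local Open Scope ring_scope.
Set Implicit Arguments. Unset Strict Implicit.

Lemma inFE (R : realType) (d k : nat) (c : 'I_k -> pt R d) eps pi j :
  (j \in Fset c eps pi) = [&& in_cell pi (c j), in_cell pi (Defs.shift (c j) 1 eps)
     & in_cell pi (Defs.shift (c j) (-1) eps)].
Proof.
rewrite inE /damaged_in.
by case: (in_cell pi (c j)); case: (in_cell pi (Defs.shift (c j) 1 eps));
  case: (in_cell pi (Defs.shift (c j) (-1) eps)).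
Qed.

Lemma in_cell_cons (R : realType) (d : nat) (pi : cpath R d) ci xi lam y :
  in_cell ((ci, xi, lam) :: pi) y =
  (if lam then xi < y ci else y ci <= xi) && in_cell pi y.
Proof. by []. Qed.

Lemma tdE (R : realType) (d : nat) ci xi (l r : tree R d) eps y :
  tree_damages (Node ci xi l r) eps y =
  if y ci <= xi then
    (if Defs.shift y 1 eps ci <= xi then leaf_addr l (Defs.shift y 1 eps) != leaf_addr l y else true)
    || (if Defs.shift y (-1) eps ci <= xi then leaf_addr l (Defs.shift y (-1) eps) != leaf_addr l y else true)
  else
    (if Defs.shift y 1 eps ci <= xi then true else leaf_addr r (Defs.shift y 1 eps) != leaf_addr r y)
    || (if Defs.shift y (-1) eps ci <= xi then true else leaf_addr r (Defs.shift y (-1) eps) != leaf_addr r y).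
Proof.
rewrite /tree_damages /=.
by case: (y ci <= xi); case: (Defs.shift y 1 eps ci <= xi); case: (Defs.shift y (-1) eps ci <= xi).
Qed.

Definition aF (R : realType) (d k : nat) (c : 'I_k -> pt R d) eps pi : nat :=
  (\sum_(j < k) (j \in Fset c eps pi))%N.
Definition gF (R : realType) (d k : nat) (c : 'I_k -> pt R d) eps t pi : nat :=
  (\sum_(j < k) ((j \in Fset c eps pi) && tree_damages t eps (c j)))%N.
Definition cF (R : realType) (d k : nat) (c : 'I_k -> pt R d) eps ci xi pi : nat :=
  (\sum_(j < k) ((j \in Fset c eps pi) && cut_damages ci xi eps (c j)))%N.

Definition useful (R : realType) (d k : nat) (c : 'I_k -> pt R d) eps pi ci xi :=
  exists p q : pt R d,
    [/\ inX c eps p, inX c eps q, in_cell pi p, in_cell pi q & separates ci xi p q].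

Definition hyp2 (R : realType) (d k : nat) (c : 'I_k -> pt R d) eps pi :=
  (aF c eps pi)%:R <= Num.sqrt (k%:R : R) \/
  (forall ci xi, useful c eps pi ci xi -> eps * (aF c eps pi)%:R / 2 <= (cF c eps ci xi pi)%:R).

Definition sepinv (R : realType) (d k : nat) (c : 'I_k -> pt R d) eps t pi :=
  forall i j, i \in Fset c eps pi -> j \in Fset c eps pi -> i != j ->
    leaf_addr t (c i) != leaf_addr t (c j).

Lemma card_sumE (k : nat) (A : {set 'I_k}) : #|A| = (\sum_(j < k) (j \in A))%N.
Proof.
rewrite -sum1_card big_mkcond /=; apply: eq_bigr => i _; by case: (i \in A).
Qed.

Lemma nat_le_pow (m : nat) : (m <= 2 ^ m - 1)%N.
Proof. have := ltn_expl m (ltnSn 1). lia. Qed.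

Lemma decA (R : realType) (d k : nat) (c : 'I_k -> pt R d) eps pi ci xi j :
  (((j \in Fset c eps pi) : nat) =
  (((j \in Fset c eps pi) && cut_damages ci xi eps (c j)) : nat)
  + (j \in Fset c eps ((ci, xi, false) :: pi))
  + (j \in Fset c eps ((ci, xi, true) :: pi)))%N.
Proof.
rewrite !inFE !in_cell_cons /cut_damages /separates !ltNge.
case: (c j ci <= xi); case: (Defs.shift (c j) 1 eps ci <= xi);
case: (Defs.shift (c j) (-1) eps ci <= xi);
case: (in_cell pi (c j)); case: (in_cell pi (Defs.shift (c j) 1 eps));
case: (in_cell pi (Defs.shift (c j) (-1) eps)) => //.
Qed.

Lemma decG (R : realType) (d k : nat) (c : 'I_k -> pt R d) eps pi ci xi l r j :
  ((((j \in Fset c eps pi) && tree_damages (Node ci xi l r) eps (c j)) : nat) =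
  (((j \in Fset c eps pi) && cut_damages ci xi eps (c j)) : nat)
  + ((j \in Fset c eps ((ci, xi, false) :: pi)) && tree_damages l eps (c j))
  + ((j \in Fset c eps ((ci, xi, true) :: pi)) && tree_damages r eps (c j)))%N.
Proof.
rewrite tdE /tree_damages !inFE !in_cell_cons /cut_damages /separates !ltNge.
case: (c j ci <= xi); case: (Defs.shift (c j) 1 eps ci <= xi);
case: (Defs.shift (c j) (-1) eps ci <= xi);
case: (in_cell pi (c j)); case: (in_cell pi (Defs.shift (c j) 1 eps));
case: (in_cell pi (Defs.shift (c j) (-1) eps)) => //=.
all: by rewrite ?orbT ?addn0 ?add0n.
Qed.

Lemma sumA (R : realType) (d k : nat) (c : 'I_k -> pt R d) eps pi ci xi :
  aF c eps pi = (cF c eps ci xi pi + aF c eps ((ci, xi, false) :: pi)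
                 + aF c eps ((ci, xi, true) :: pi))%N.
Proof. rewrite /aF /cF -!big_split; apply: eq_bigr => j _; exact: decA. Qed.

Lemma sumG (R : realType) (d k : nat) (c : 'I_k -> pt R d) eps pi ci xi l r :
  gF c eps (Node ci xi l r) pi = (cF c eps ci xi pi + gF c eps l ((ci, xi, false) :: pi)
                 + gF c eps r ((ci, xi, true) :: pi))%N.
Proof. rewrite /gF /cF -!big_split; apply: eq_bigr => j _; exact: decG. Qed.

Lemma FconsE (R : realType) (d k : nat) (c : 'I_k -> pt R d) eps pi ci xi lam j :
  j \in Fset c eps ((ci, xi, lam) :: pi) -> j \in Fset c eps pi /\
     (if lam then xi < c j ci else c j ci <= xi).
Proof.
rewrite !inFE !in_cell_cons => /and3P[/andP[h1 h2] /andP[_ h3] /andP[_ h4]].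
by rewrite h2 h3 h4.
Qed.

Lemma nu_same (R : realType) (d k : nat) (c : 'I_k -> pt R d) eps pi ci xi :
  ~ useful c eps pi ci xi -> forall p q, inX c eps p -> inX c eps q ->
  in_cell pi p -> in_cell pi q -> (p ci <= xi) = (q ci <= xi).
Proof.
move=> nu p q hp hq cp cq.
case E: (separates ci xi p q).
  by exfalso; apply: nu; exists p, q; split.
by move: E; rewrite /separates => /negbT; rewrite negbK => /eqP.
Qed.

Lemma nu_all (R : realType) (d k : nat) (c : 'I_k -> pt R d) eps pi ci xi j0 j :
  ~ useful c eps pi ci xi -> j0 \in Fset c eps pi -> j \in Fset c eps pi ->
  [/\ c j ci <= xi = (c j0 ci <= xi), Defs.shift (c j) 1 eps ci <= xi = (c j0 ci <= xi)
    & Defs.shift (c j) (-1) eps ci <= xi = (c j0 ci <= xi)].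
Proof.
move=> nu; rewrite !inFE => /and3P[a0 _ _] /and3P[a1 a2 a3].
have X0 : inX c eps (c j0) by exists j0; left.
have X1 : inX c eps (c j) by exists j; left.
have X2 : inX c eps (Defs.shift (c j) 1 eps) by exists j; right; left.
have X3 : inX c eps (Defs.shift (c j) (-1) eps) by exists j; right; right.
by split; apply: (nu_same nu).
Qed.

Lemma main_ind (R : realType) (d k : nat) (c : 'I_k -> pt R d) (eps : R) (t : tree R d) :
  0 <= eps -> forall m pi,
  (forall pi', (size pi' < size pi + m)%N -> hyp2 c eps pi') ->
  sepinv c eps t pi ->
  eps / 2 * (m%:R * ((aF c eps pi)%:R - (gF c eps t pi)%:R)
     - ((2 ^ m)%:R - 1) * (Num.sqrt (k%:R : R) + 1)) <= (gF c eps t pi)%:R.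
Proof.
move=> he; have hs : 0 <= Num.sqrt (k%:R : R) by apply: sqrtr_ge0.
elim: t => [|ci xi l IHl r IHr] m pi Hh Hs.
- have -> : gF c eps (Leaf R d) pi = 0%N.
    by rewrite /gF big1 // => j _; rewrite /tree_damages /= andbF.
  have ha : (aF c eps pi <= 1)%N.
    rewrite /aF -card_sumE leqNgt; apply/negP => /card_gt1P [x [y [hx hy hxy]]].
    by have := Hs x y hx hy hxy.
  have har : (aF c eps pi)%:R <= 1 :> R by rewrite (_ : 1 = 1%:R) // ler_nat.
  have hm : m%:R + 1 <= (2 ^ m)%:R :> R by rewrite natr1 ler_nat ltn_expl.
  have ha0 : 0 <= (aF c eps pi)%:R :> R by apply: ler0n.
  have hm0 : 0 <= m%:R :> R by apply: ler0n.
  rewrite mulr0n subr0; apply: mulr_ge0_le0; first by lra.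
  nra.
have g0 : forall t' pi', 0 <= (gF c eps t' pi')%:R :> R by move=> *; apply: ler0n.
case: (pselect (useful c eps pi ci xi)) => [U|NU].
- case: m Hh => [|m'] Hh.
    rewrite expn0 mul0r subrr mul0r subrr mulr0; exact: g0.
  have HL : forall pi', (size pi' < size ((ci, xi, false) :: pi) + m')%N -> hyp2 c eps pi'.
    by move=> pi' h; apply: Hh; move: h => /=; lia.
  have HR : forall pi', (size pi' < size ((ci, xi, true) :: pi) + m')%N -> hyp2 c eps pi'.
    by move=> pi' h; apply: Hh; move: h => /=; lia.
  have SL : sepinv c eps l ((ci, xi, false) :: pi).
    move=> i j /FconsE [hi li] /FconsE [hj lj] hij.
    by have := Hs i j hi hj hij; rewrite /= li lj eqseq_cons eqxx.
  have SR : sepinv c eps r ((ci, xi, true) :: pi).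
    move=> i j /FconsE [hi li] /FconsE [hj lj] hij.
    have := Hs i j hi hj hij; rewrite /= !leNgt li lj /=.
    by rewrite eqseq_cons eqxx.
  have IL := IHl m' _ HL SL.
  have IR := IHr m' _ HR SR.
  have H2 : hyp2 c eps pi by apply: Hh; lia.
  have hC : eps / 2 * ((aF c eps pi)%:R - (gF c eps (Node ci xi l r) pi)%:R
               - (Num.sqrt (k%:R : R) + 1)) <= (cF c eps ci xi pi)%:R.
    have c0 : 0 <= (cF c eps ci xi pi)%:R :> R by apply: ler0n.
    have := g0 (Node ci xi l r) pi.
    case: H2 => [ha | hcut].
      move=> ?; nra.
    have := hcut ci xi U; move=> ? ?; nra.
  move: hC IL IR; rewrite (sumA c eps pi ci xi) (sumG c eps pi ci xi l r).
  rewrite !natrD -addn1 natrD expnS natrM.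
  move=> *; lra.
case: (boolP [exists j, (j \in Fset c eps pi) && (c j ci <= xi)]).
- move=> /existsP [j0 /andP [hj0 hl0]].
  have All : forall j, j \in Fset c eps pi -> [/\ c j ci <= xi,
     Defs.shift (c j) 1 eps ci <= xi & Defs.shift (c j) (-1) eps ci <= xi].
    by move=> j hj; have [-> -> ->] := nu_all NU hj0 hj; rewrite hl0.
  have -> : gF c eps (Node ci xi l r) pi = gF c eps l pi.
    rewrite /gF; apply: eq_bigr => j _; case jF: (j \in Fset c eps pi) => //=.
    by have [h0 h1 h2] := All j jF; rewrite tdE h0 h1 h2.
  apply: IHl => // i j hi hj hij.
  have [hi0 _ _] := All i hi; have [hj0' _ _] := All j hj.
  by have := Hs i j hi hj hij; rewrite /= hi0 hj0' eqseq_cons eqxx.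
- rewrite negb_exists => /forallP Hn.
  have All : forall j, j \in Fset c eps pi -> [/\ c j ci <= xi = false,
     Defs.shift (c j) 1 eps ci <= xi = false & Defs.shift (c j) (-1) eps ci <= xi = false].
    move=> j hj; have := Hn j; rewrite hj /= => /negbTE h0.
    by have [_ -> ->] := nu_all NU hj hj; rewrite h0.
  have -> : gF c eps (Node ci xi l r) pi = gF c eps r pi.
    rewrite /gF; apply: eq_bigr => j _; case jF: (j \in Fset c eps pi) => //=.
    by have [h0 h1 h2] := All j jF; rewrite tdE h0 h1 h2.
  apply: IHr => // i j hi hj hij.
  have [hi0 _ _] := All i hi; have [hj0' _ _] := All j hj.
  by have := Hs i j hi hj hij; rewrite /= hi0 hj0' eqseq_cons eqxx.
Qed.

Lemma ln2_bounds (R : realType) : 0 < ln (2 : R) /\ ln (2 : R) <= 1.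
Proof.
split; first by apply: ln_gt0; lra.
have := expR_ge1Dx (ln (2 : R)); rewrite lnK ?posrE; lra.
Qed.

Lemma ln16 (R : realType) (n : nat) : ln ((16 ^ n)%:R : R) = ln (2 : R) * (4 * n)%:R.
Proof.
have -> : (16 ^ n = 2 ^ (4 * n))%N by rewrite expnM.
by rewrite natrX lnXn ?mulr_natr //; lra.
Qed.

Lemma ln_pow_le (R : realType) (n k : nat) : (0 < k)%N -> (16 ^ n <= k)%N ->
  n%:R <= ln (k%:R : R) / ln (2 : R) / 4.
Proof.
move=> k0 hn; have [l2 l2'] := ln2_bounds R.
rewrite ler_pdivlMr; last by lra.
rewrite ler_pdivlMr //.
have : ln ((16 ^ n)%:R : R) <= ln (k%:R : R).
  by rewrite ler_ln ?posrE ?ltr0n ?expn_gt0 // ler_nat.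
rewrite ln16 natrM; lra.
Qed.

Lemma ln_pow_ge (R : realType) (n k : nat) : (0 < k)%N -> (k < 16 ^ n)%N ->
  ln (k%:R : R) <= 4 * n%:R.
Proof.
move=> k0 hn; have [l2 l2'] := ln2_bounds R.
have : ln (k%:R : R) <= ln ((16 ^ n)%:R : R).
  by rewrite ler_ln ?posrE ?ltr0n ?expn_gt0 // ler_nat ltnW.
rewrite ln16 natrM.
have : 0 <= n%:R :> R by apply: ler0n.
nra.
Qed.

Lemma qs_bound (R : realType) (n k : nat) : (500 < k)%N -> (16 ^ n <= k)%N ->
  4 * (2 ^ n)%:R * (Num.sqrt (k%:R : R) + 1) <= k%:R.
Proof.
move=> hk hn.
set S := Num.sqrt (k%:R : R).
have S2 : S ^+ 2 = k%:R by rewrite sqr_sqrtr // ler0n.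
have S0 : 0 <= S by apply: sqrtr_ge0.
have k501 : 501 <= k%:R :> R by rewrite ler_nat.
have S22 : 22 <= S by nra.
have q4 : ((2 ^ n)%:R : R) ^+ 4 <= k%:R.
  by rewrite -natrX -expnM mulnC expnM ler_nat.
have q1 : 1 <= ((2 ^ n)%:R : R) by rewrite ler1n expn_gt0.
case: (leqP n 2) => hn2.
  have : ((2 ^ n)%:R : R) <= 4.
    by rewrite (_ : 4 = (2 ^ 2)%:R) // ler_nat leq_pexp2l.
  nra.
have q8 : 8 <= ((2 ^ n)%:R : R).
  by rewrite (_ : 8 = (2 ^ 3)%:R) // ler_nat leq_pexp2l.
set q := ((2 ^ n)%:R : R) in q4 q1 q8 *.
have h64 : 64 * q ^+ 2 <= S ^+ 2.
  rewrite S2; apply: le_trans q4.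
  have -> : q ^+ 4 = q ^+ 2 * q ^+ 2 by rewrite -exprD.
  apply: ler_wpM2r; first by apply: exprn_ge0; lra.
  nra.
have h8 : 8 * q <= S.
  rewrite -(ler_pXn2r (n := 2)) //; last by rewrite nnegrE; lra.
  by rewrite exprMn (_ : 8 ^+ 2 = 64) //; lra.
nra.
Qed.

Lemma final_arith (R : realType) (de Cr x M k D q s : R) : 0 < de -> de < 1/100 -> x <= 4 * M ->
  Cr < x + 1 -> 0 < Cr -> 1 <= M -> 0 <= D -> 4 * q * s <= k -> 0 <= s -> 1 <= q -> 0 < k ->
  25 * de * (M * (k - D) - (2 * q - 1) * s) <= D * Cr -> D < 2 * de * k -> False.
Proof.
move=> d0 d1 hx hC C0 M1 D0 hqs s0 q1 k0 h1 hlt.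
have u0 : 0 < de * k by apply: mulr_gt0.
have a1 : D * Cr <= 2 * de * k * Cr by apply: ler_wpM2r; lra.
have a2 : 2 * de * k * Cr <= 2 * de * k * (4 * M + 1).
  apply: ler_wpM2l; lra.
have a3 : M * (k - D) >= M * (k - 2 * de * k) by apply: ler_wpM2l; lra.
have a4 : (2 * q - 1) * s <= 2 * q * s by nra.
have a5 : 25 * de * (M * (k - 2 * de * k) - 2 * q * s) <= 25 * de * (M * (k - D) - (2 * q - 1) * s).
  apply: ler_wpM2l; lra.
have a6 : 25 * de * (M * (k - 2 * de * k) - 2 * q * s) >= 25 * de * (M * k * (98/100) - k / 2).
  apply: ler_wpM2l; first lra.
  have : M * (2 * de * k) <= M * (k * (2/100)) by apply: ler_wpM2l; nra.
  lra.
have : 25 * de * (M * k * (98/100) - k / 2) <= 2 * de * k * (4 * M + 1) by lra.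
have : de * k * (165/10 * M - 145/10) > 0.
  apply: mulr_gt0 => //; lra.
nra.
Qed.

Lemma fieldE (R : realType) (de C P : R) : C != 0 -> 50 * de / C / 2 * P * C = 25 * de * P.
Proof. by move=> hC; field. Qed.

Theorem lemma10 (R : realType) (k : nat) (delta : R) (d : nat) (eps : R)
  (c : 'I_k -> pt R d) :
  (500 < k)%N ->
  (ln (k%:R : R)) ^+ 3 / Num.sqrt (k%:R : R) < delta ->
  delta < 1 / 100 ->
  d = (300 * `|Num.ceil (ln (k%:R : R))|)%N ->
  eps = 50 * delta / (Num.ceil (ln (k%:R : R)))%:~R ->
  (forall i, in_grid eps (c i)) ->
  (* (1) *)
  (forall i j, i != j -> Num.sqrt (d%:R : R) / 5 <= dist2 (c i) (c j)) ->
  (* (2) *)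
  (forall pi : cpath R d,
     (size pi)%:R <= ln (k%:R : R) / ln (2 : R) / 4 ->
     (#|Fset c eps pi|%:R <= Num.sqrt (k%:R : R)) \/
     (forall (i : 'I_d) (xi : R),
        (exists p q : pt R d,
           [/\ inX c eps p, inX c eps q, in_cell pi p, in_cell pi q
             & separates i xi p q]) ->
        eps * #|Fset c eps pi|%:R / 2 <=
          #|[set j in Fset c eps pi | cut_damages i xi eps (c j)]|%:R)) ->
  forall t : tree R d,
    (forall i j, i != j -> leaf_addr t (c i) != leaf_addr t (c j)) ->
    2 * delta * k%:R <= #|[set i | tree_damages t eps (c i)]|%:R.
Proof.
move=> hk hdel1 hdel2 hd heps _ _ H2 t Ht.
have k0 : (0 < k)%N by apply: leq_trans hk.
set x := ln (k%:R : R) in hdel1 hdel2 heps H2 *.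
have x0 : 0 < x by apply: ln_gt0; rewrite ltr1n; apply: leq_trans hk.
have S0 : 0 < Num.sqrt (k%:R : R) by rewrite sqrtr_gt0 ltr0n.
have del0 : 0 < delta.
  apply: le_lt_trans hdel1; apply: divr_ge0; last exact: ltW.
  by apply: exprn_ge0; exact: ltW.
have [hC1 hC2] := andP (ceil_itv x).
set Cr := (Num.ceil x)%:~R in hC2 heps.
have hC1' : Cr < x + 1 by move: hC1; rewrite intrD /=; lra.
have Cr0 : 0 < Cr by lra.
have eps0 : 0 <= eps by rewrite heps; apply: divr_ge0; [lra | exact: ltW].
set n0 := trunc_log 16 k.
have hn0 : (16 ^ n0 <= k)%N by apply: trunc_logP.
have hM : (k < 16 ^ n0.+1)%N by apply: trunc_log_ltn.
have FT : forall j, j \in Fset c eps [::] by move=> j; rewrite inFE.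
have Hh : forall pi', (size pi' < size ([::] : cpath R d) + n0.+1)%N -> hyp2 c eps pi'.
  move=> pi' hs.
  have hs' : (16 ^ size pi' <= k)%N.
    by apply: leq_trans hn0; apply: leq_pexp2l => //; move: hs => /=; lia.
  case: (H2 pi' (ln_pow_le R k0 hs')) => [h|h]; [left|right].
    by rewrite /aF -card_sumE.
  move=> ci xi U; have := h ci xi U.
  have e1 : #|Fset c eps pi'| = aF c eps pi' by rewrite /aF card_sumE.
  have e2 : #|[set j in Fset c eps pi' | cut_damages ci xi eps (c j)]| = cF c eps ci xi pi'.
    by rewrite /cF card_sumE; apply: eq_bigr => j _; rewrite inE.
  by rewrite e1 e2.
have Hs : sepinv c eps t [::] by move=> i j _ _; apply: Ht.
have := main_ind eps0 Hh Hs.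
have -> : aF c eps [::] = k.
  rewrite /aF (eq_bigr (fun _ => 1%N)) => [|j _]; last by rewrite FT.
  by rewrite sum_nat_const card_ord muln1.
have -> : gF c eps t [::] = #|[set i | tree_damages t eps (c i)]|.
  rewrite card_sumE /gF; apply: eq_bigr => j _; by rewrite FT inE.
set D := #|_|.
have := ln_pow_ge R k0 hM; rewrite -/x => hxM.
have := qs_bound R hk hn0.
rewrite expnS natrM.
set q := ((2 ^ n0)%:R : R).
set s := Num.sqrt (k%:R : R) + 1.
move=> hqs hmain.
have s0 : 0 <= s by rewrite /s; lra.
have q1 : 1 <= q by rewrite /q ler1n expn_gt0.
have M1 : 1 <= (n0.+1)%:R :> R by rewrite ler1n.
have D0 : 0 <= D%:R :> R by apply: ler0n.
have h1 : 25 * delta * ((n0.+1)%:R * (k%:R - D%:R) - (2 * q - 1) * s) <= D%:R * Cr.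
  have E : eps / 2 * ((n0.+1)%:R * (k%:R - D%:R) - (2 * q - 1) * s) * Cr
           = 25 * delta * ((n0.+1)%:R * (k%:R - D%:R) - (2 * q - 1) * s).
    by rewrite heps fieldE // gt_eqF.
  rewrite -E; apply: ler_wpM2r; [lra | exact: hmain].
rewrite leNgt; apply/negP => hlt.
have kr0 : 0 < k%:R :> R by rewrite ltr0n.
exact: (final_arith del0 hdel2 hxM hC1' Cr0 M1 D0 hqs s0 q1 kr0 h1 hlt).
Qed.
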